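(* In the setting below, the minimum distance $d$ of $\mathrm{UB}(a,\ell)$ satisfies $$d\le\min\{\mathrm{wt}(a)^{\ell}+1,\ \mathrm{wt}(h)\}.$$
   Context: Setting. Let $n\ge 2$ and $\mathcal R_n=\mathbb F_2[x]/(x^n-1)$. Identifications and weights. Vectors in $\mathbb F_2^n$ are identified with elements of $\mathcal R_n$ via $c\mapsto\sum_ic_ix^i$. $\mathrm{wt}(g)$ is the number of nonzero coefficients of the degree-$<n$ representative of $g$. $\mathrm{Circ}(g)$ is the $n\times n$ binary matrix whose $i$-th row is the coefficient vector of $x^ig(x)$. Code data. Let $a(x)\in\mathbb F_2[x]$ with $a\mid x^n-1$ and $1\le r:=\deg a<n$. Let $\ell\ge1$, $t=2^\ell$, $b=a^t\in\mathcal R_n$, and $h=(x^n-1)/a\in\mathbb F_2[x]$. The univariate bicycle code $\mathrm{UB}(a,\ell)$ is the CSS code on $2n$ qubits with $H_X=[\mathrm{Circ}(a),\mathrm{Circ}(b)]$ and $H_Z=[\mathrm{Circ}(b)^{\mathsf T},\mathrm{Circ}(a)^{\mathsf T}]$. Distances. With $\ker(H)=\{c:Hc^{\mathsf T}=0\}$ and $\mathrm{rs}$ the row space, define $d_Z=\min\{\mathrm{wt}(v):v\in\ker(H_Z)\setminus\mathrm{rs}(H_X)\}$, define $d_X=\min\{\mathrm{wt}(v):v\in\ker(H_X)\setminus\mathrm{rs}(H_Z)\}$, and set $d=\min(d_X,d_Z)$. Here the weight of a vector in $\mathbb F_2^{2n}$ is its number of nonzero entries. *)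

(* Defs.v *)
From HB Require Import structures.
From mathcomp Require Import all_boot all_order all_algebra.
Set Implicit Arguments. Unset Strict Implicit. Unset Printing Implicit Defensive.
Import GRing.Theory.
Local Open Scope ring_scope.

(* Polynomials over F_2; R_n = F_2[x]/(x^n - 1) is handled through the
   degree-< n representative  g %% ('X^n - 1). *)
Notation F2poly := {poly 'F_2}.

Definition modn_poly (n : nat) (g : F2poly) : F2poly := g %% ('X^n - 1).

Definition pwt (n : nat) (g : F2poly) : nat :=
  #|[set j : 'I_n | (modn_poly n g)`_j != 0]|.

Definition Circ (n : nat) (g : F2poly) : 'M['F_2]_n :=
  \matrix_(i < n, j < n) (modn_poly n ('X^i * g))`_j.

Definition vwt (m : nat) (v : 'rV['F_2]_m) : nat := #|[set j : 'I_m | v 0 j != 0]|.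

Definition UB_b (n : nat) (a : F2poly) (l : nat) : F2poly :=
  modn_poly n (a ^+ (2 ^ l)).

Definition UB_HX (n : nat) (a : F2poly) (l : nat) : 'M['F_2]_(n, n + n) :=
  row_mx (Circ n a) (Circ n (UB_b n a l)).

Definition UB_HZ (n : nat) (a : F2poly) (l : nat) : 'M['F_2]_(n, n + n) :=
  row_mx (Circ n (UB_b n a l))^T (Circ n a)^T.

(* min { wt v : v in ker(H1) \ rs(H2) }.  The default value (2n+1 for length
   2n) exceeds every possible weight, so it plays the role of +infinity
   (minimum of the empty set). *)
Definition css_dist (m k : nat) (H1 H2 : 'M['F_2]_(k, m)) : nat :=
  \big[minn/m.+1]_(v : 'rV['F_2]_m | (H1 *m v^T == 0) && ~~ (v <= H2)%MS) vwt v.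

Definition UB_dZ (n : nat) (a : F2poly) (l : nat) : nat :=
  css_dist (UB_HZ n a l) (UB_HX n a l).
Definition UB_dX (n : nat) (a : F2poly) (l : nat) : nat :=
  css_dist (UB_HX n a l) (UB_HZ n a l).
Definition UB_d (n : nat) (a : F2poly) (l : nat) : nat :=
  minn (UB_dX n a l) (UB_dZ n a l).

(* Main.v *)
Require Import Defs.
From HB Require Import structures.
From mathcomp Require Import all_boot all_order all_algebra.
From mathcomp Require Import zify.
Import GRing.Theory.
Local Open Scope ring_scope.

Lemma F2_01 (c : 'F_2) : c != 0 -> c = 1.
Proof. by case: c => [[|[|m]]] //= H _; apply: val_inj. Qed.
Lemma F2_add (c : 'F_2) : c + c = 0.
Proof. by case: c => [[|[|m]]] //= H; apply: val_inj. Qed.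
Lemma char2 : (2 \in [char {poly 'F_2}])%N.
Proof. by rewrite pchar_poly pchar_Fp. Qed.

Section S.
Variable n : nat.
Hypothesis n0 : (0 < n)%N.
Local Notation M := ('X^n - 1 : {poly 'F_2}).

Lemma sizeM : size M = n.+1.
Proof. exact: size_Xn_sub_1. Qed.
Lemma M_neq0 : M != 0.
Proof. by rewrite -size_poly_eq0 sizeM. Qed.

Lemma modn_size p : (size (modn_poly n p) <= n)%N.
Proof. by have := ltn_modp p M; rewrite M_neq0 sizeM. Qed.

Lemma modn_expand p :
  modn_poly n p = \sum_(i < n) (modn_poly n p)`_i *: 'X^i.
Proof.
rewrite -poly_def; apply/polyP => k; rewrite coef_poly; case: ltnP => // hk.
by apply: nth_default; apply: leq_trans (modn_size p) hk.
Qed.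

Lemma modn_sum (I : Type) (r : seq I) (P : pred I) (F : I -> {poly 'F_2}) :
  modn_poly n (\sum_(i <- r | P i) F i) = \sum_(i <- r | P i) modn_poly n (F i).
Proof.
exact: (big_morph (fun p => modn_poly n p) (fun p q => modpD M p q) (mod0p M)).
Qed.

Lemma modn_Xk k : modn_poly n ('X^k) = 'X^(k %% n).
Proof.
rewrite /modn_poly {1}(divn_eq k n); elim: (k %/ n)%N => [|q IH].
  rewrite mul0n add0n modp_small // size_polyXn sizeM ltnS.
  exact: ltn_pmod.
rewrite mulSn -addnA exprD -modp_mul IH.
have -> : 'X^n * 'X^(k %% n) = 'X^(k %% n) * M + 'X^(k %% n) :> {poly 'F_2}.
  by rewrite mulrC mulrBr mulr1 subrK.
rewrite modp_addl_mul_small //.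
rewrite size_polyXn sizeM ltnS ltn_pmod //.
Qed.

Lemma modn_mod p : modn_poly n (modn_poly n p) = modn_poly n p.
Proof. exact: modp_id. Qed.

Lemma modn_mulmod p q :
  modn_poly n (modn_poly n p * modn_poly n q) = modn_poly n (p * q).
Proof. by rewrite /modn_poly modp_mul mulrC modp_mul mulrC. Qed.

Lemma pwt_modn p : pwt n (modn_poly n p) = pwt n p.
Proof. by rewrite /pwt modn_mod. Qed.

Lemma pwt_monomials (I : finType) (A : {set I}) (f : I -> nat) :
  (pwt n (\sum_(i in A) 'X^(f i)) <= #|A|)%N.
Proof.
pose g i : 'I_n := Ordinal (ltn_pmod (f i) n0).
apply: leq_trans (leq_imset_card g A).
apply: subset_leq_card; apply/subsetP => j; rewrite !inE.
rewrite modn_sum; under eq_bigr do rewrite modn_Xk.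
apply: contraR => hj; rewrite coef_sum big1 // => i iA.
rewrite coefXn; case: eqP => // e; case/negP: hj; apply/imsetP.
by exists i => //; apply: val_inj.
Qed.

Definition supp p := [set j : 'I_n | (modn_poly n p)`_j != 0].

Lemma pwt_supp p : pwt n p = #|supp p|.
Proof. by []. Qed.

Lemma modn_set p : modn_poly n p = \sum_(j in supp p) 'X^j.
Proof.
rewrite {1}modn_expand [RHS]big_mkcond /=; apply: eq_bigr => i _; rewrite inE.
case: eqP => [->|/eqP h]; first by rewrite scale0r.
by rewrite (F2_01 _ h) scale1r.
Qed.

Lemma pwt_mul p q : (pwt n (p * q) <= pwt n p * pwt n q)%N.
Proof.
rewrite -pwt_modn -modn_mulmod pwt_modn (modn_set p) (modn_set q) big_distrlr /=.
under eq_bigr do under eq_bigr do rewrite -exprD.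
rewrite pair_big_dep /=.
rewrite (eq_bigl (fun u => u \in setX (supp p) (supp q))); last first.
  by move=> [i j]; rewrite in_setX.
by rewrite (pwt_supp p) (pwt_supp q) -cardsX; exact: pwt_monomials.
Qed.

Lemma pwt_sq p : (pwt n (p ^+ 2) <= pwt n p)%N.
Proof.
have -> : p ^+ 2 = p * p by rewrite expr2.
rewrite -pwt_modn -modn_mulmod -expr2 pwt_modn modn_set.
rewrite -(pFrobenius_autE char2) rmorph_sum /=.
under eq_bigr do rewrite pFrobenius_autE -exprM.
by rewrite (pwt_supp p); exact: pwt_monomials.
Qed.

Lemma pwt1 : (pwt n 1 <= 1)%N.
Proof.
have -> : (1 : {poly 'F_2}) = \sum_(i in [set ord0 : 'I_1]) 'X^0.
  by rewrite big_set1 expr0.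
by apply: leq_trans (pwt_monomials _ _ _) _; rewrite cards1.
Qed.

Lemma pwt_pow a l : (pwt n (a ^+ (2 ^ l - 1)) <= pwt n a ^ l)%N.
Proof.
elim: l => [|l IH]; first by rewrite expn0 subnn expr0 pwt1.
have -> : (2 ^ l.+1 - 1 = 1 + (2 ^ l - 1) * 2)%N.
  rewrite expnS; have := expn_gt0 2 l; move: (2 ^ l)%N => t; lia.
rewrite exprD exprM expr1 expnS.
apply: leq_trans (pwt_mul _ _) _; rewrite leq_mul2l; apply/orP; right.
exact: leq_trans (pwt_sq _) IH.
Qed.

Definition vec p : 'rV['F_2]_n := \row_j (modn_poly n p)`_j.
Definition pol (D : 'rV['F_2]_n) : {poly 'F_2} := Poly [seq D 0 i | i <- enum 'I_n].

Lemma vwt_vec p : vwt (vec p) = pwt n p.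
Proof. by rewrite /vwt /pwt; apply: eq_card => j; rewrite !inE mxE. Qed.

Lemma vwt0 : vwt (0 : 'rV['F_2]_n) = 0%N.
Proof.
by apply/eqP; rewrite cards_eq0; apply/eqP/setP => j; rewrite !inE mxE eqxx.
Qed.

Lemma vec_eq p q : vec p = vec q -> modn_poly n p = modn_poly n q.
Proof.
move=> E; rewrite (modn_expand p) (modn_expand q); apply: eq_bigr => i _.
by have := congr1 (fun v : 'rV_n => v 0 i) E; rewrite !mxE => ->.
Qed.

Lemma vec0 : vec 0 = 0.
Proof. by apply/rowP => j; rewrite !mxE /modn_poly mod0p coef0. Qed.

Lemma vecM : vec M = 0.
Proof. by apply/rowP => j; rewrite !mxE /modn_poly modpp coef0. Qed.

Lemma vec_modn p : vec (modn_poly n p) = vec p.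
Proof. by rewrite /vec modn_mod. Qed.

Lemma vec_mulmod p q : vec (p * modn_poly n q) = vec (p * q).
Proof. by rewrite /vec /modn_poly modp_mul. Qed.

Lemma vecD p q : vec (p + q) = vec p + vec q.
Proof. by apply/rowP => j; rewrite !mxE /modn_poly modpD coefD. Qed.

Lemma vec_pol D : vec (pol D) = D.
Proof.
apply/rowP => j; rewrite mxE /modn_poly modp_small.
  by rewrite coef_Poly (nth_map j) ?size_enum_ord // nth_ord_enum.
rewrite sizeM ltnS; apply: leq_trans (size_Poly _) _.
by rewrite size_map size_enum_ord.
Qed.

Lemma vec_Circ p g : vec p *m Circ n g = vec (p * g).
Proof.
apply/rowP => j; rewrite !mxE.
under eq_bigr do rewrite !mxE.
have -> : modn_poly n (p * g) = modn_poly n (modn_poly n p * g).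
  by rewrite /modn_poly [X in _ = X %% _]mulrC modp_mul mulrC.
rewrite [in RHS](modn_expand p) mulr_suml modn_sum coef_sum.
by apply: eq_bigr => i _; rewrite -scalerAl /modn_poly modpZl coefZ.
Qed.

Lemma vwt_row (u w : 'rV['F_2]_n) : vwt (row_mx u w) = (vwt u + vwt w)%N.
Proof.
rewrite /vwt -!sum1_card big_split_ord /=.
by congr (_ + _)%N; apply: eq_bigl => i; rewrite !inE ?row_mxEl ?row_mxEr.
Qed.

Lemma ker_cond a l (u w : 'rV['F_2]_n) :
  (UB_HZ n a l *m (row_mx u w)^T == 0) =
  (u *m Circ n (UB_b n a l) + w *m Circ n a == 0).
Proof. by rewrite /UB_HZ tr_row_mx mul_row_col -!trmx_mul -linearD trmx_eq0. Qed.

Lemma rs_cond a l (u w : 'rV['F_2]_n) : (row_mx u w <= UB_HX n a l)%MS ->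
  exists D : 'rV_n, u = D *m Circ n a /\ w = D *m Circ n (UB_b n a l).
Proof.
by case/submxP => D; rewrite /UB_HX mul_mx_row => /eq_row_mx [-> ->]; exists D.
Qed.

End S.

Lemma bigmin_le (I : eqType) (r : seq I) (P : pred I) (F : I -> nat) x i0 :
  i0 \in r -> P i0 -> (\big[minn/x]_(i <- r | P i) F i <= F i0)%N.
Proof.
move=> + Pi; elim: r => //= j r IH; rewrite in_cons big_cons.
case/orP => [/eqP <-|/IH h]; first by rewrite Pi geq_minl.
by case: (P j) => //; apply: leq_trans (geq_minr _ _) h.
Qed.

Lemma css_le (m k : nat) (H1 H2 : 'M['F_2]_(k, m)) v :
  H1 *m v^T == 0 -> ~~ (v <= H2)%MS -> (css_dist H1 H2 <= vwt v)%N.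
Proof.
move=> h1 h2; rewrite /css_dist.
by apply: bigmin_le; [exact: mem_index_enum | rewrite h1 h2].
Qed.

Theorem corollary2 (n : nat) (a : {poly 'F_2}) (l : nat) :
  (2 <= n)%N ->
  a %| 'X^n - 1 ->
  (1 <= (size a).-1)%N -> ((size a).-1 < n)%N ->
  (1 <= l)%N ->
  (UB_d n a l <= minn ((pwt n a) ^ l).+1 (pwt n (('X^n - 1) %/ a)))%N.
Proof.
move=> hn haM ha1 han hl.
have n0 : (0 < n)%N by apply: leq_trans hn.
set M := ('X^n - 1 : {poly 'F_2}) in haM *.
set h := M %/ a.
have hM : h * a = M by exact: divpK.
have a0 : a != 0 by rewrite -size_poly_eq0; move: ha1; case: (size a).
have ht : (0 < 2 ^ l)%N by rewrite expn_gt0.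
apply: leq_trans (geq_minr _ _) _; rewrite leq_min; apply/andP; split.
-
  set w := a ^+ (2 ^ l - 1).
  have wa : w * a = a ^+ (2 ^ l) by rewrite /w -exprSr subn1 prednK.
  apply: leq_trans (@css_le _ _ _ _ (row_mx (vec n 1) (vec n w)) _ _) _.
  + rewrite ker_cond !(vec_Circ _ n0) mul1r wa /UB_b vec_modn.
    by apply/eqP/rowP => j; rewrite !mxE F2_add.
  + apply/negP => /rs_cond [D [E1 _]].
    move: E1; rewrite -(vec_pol _ n0 D) (vec_Circ _ n0) => /(vec_eq _ n0).
    rewrite {1}/modn_poly modp_small; last by rewrite size_poly1 sizeM.
    move=> E; have := divp_eq (pol n D * a) M; rewrite /modn_poly in E; rewrite -E => E2.
    have : a %| (pol n D * a) %/ M * M + 1 by rewrite -E2 dvdp_mull.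
    rewrite dvdp_addr; last exact: dvdp_mull.
    by rewrite dvdp1 => /eqP ha; move: ha1; rewrite ha.
  + rewrite vwt_row !vwt_vec -[X in (_ <= X)%N]add1n; apply: leq_add; first exact: pwt1.
    exact: pwt_pow.
-
  apply: leq_trans (@css_le _ _ _ _ (row_mx 0 (vec n h)) _ _) _.
  + by rewrite ker_cond mul0mx add0r (vec_Circ _ n0) hM (vecM n).
  + apply/negP => /rs_cond [D [E1 E2]].
    move: E1 E2; rewrite -(vec_pol _ n0 D) !(vec_Circ _ n0) /UB_b vec_mulmod.
    set f := pol n D => E1 E2.
    have Ma : modn_poly n (f * a) = 0.
      by rewrite (vec_eq _ n0 _ _ (etrans (esym E1) (esym (vec0 n)))) /modn_poly mod0p.
    have Mat : modn_poly n (f * a ^+ (2 ^ l)) = 0.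
      rewrite -(prednK ht) exprS mulrA; apply/modp_eq0P.
      by apply: dvdp_mulr; apply/modp_eq0P.
    have := vec_eq _ n0 _ _ E2; rewrite Mat /modn_poly modp_small; last first.
      rewrite /h /M size_divp // size_Xn_sub_1 //; move: ha1; move: (size a).-1 => s; lia.
    move=> h0; move: hM; rewrite h0 mul0r => /esym /eqP.
    by rewrite (negbTE (M_neq0 _ n0)).
  + by rewrite vwt_row vwt0 vwt_vec.
Qed.
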